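(* Let $\mathbf{L}$ be a real symmetric $N\times N$ matrix with $\|\mathbf{L}\|\le \varrho$, with orthonormal eigenvectors $\boldsymbol{\phi}_1,\dots,\boldsymbol{\phi}_N$ and eigenvalues $\lambda_1,\dots,\lambda_N$. Let $\psi\neq 0,\varphi,c\in\mathbb{C}$, let $\mathbf{x}\in\mathbb{C}^N$ be a fixed input, and consider the ARMA$_1$ recursion $$\mathbf{y}_{t+1}=\psi\mathbf{L}\mathbf{y}_t+\varphi\mathbf{x},\qquad \mathbf{z}_{t+1}=\mathbf{y}_{t+1}+c\,\mathbf{x},$$ with arbitrary initial condition $\mathbf{y}_0$. Set $r=-\varphi/\psi$ and $p=1/\psi$. Then the frequency response of this recursion is $$H(\lambda)=c+\frac{r}{\lambda-p},\qquad\text{subject to } |p|>\varrho,$$ that is, when $|p|>\varrho$, $\mathbf{z}_t$ converges, linearly and irrespective of $\mathbf{y}_0$ and of $\mathbf{L}$, to $\sum_{n=1}^N H(\lambda_n)\langle \mathbf{x},\boldsymbol{\phi}_n\rangle\boldsymbol{\phi}_n$.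
   Context: $\mathbf{L}$ is a graph representation matrix (e.g. a possibly shifted Laplacian) of an undirected graph: symmetric and local ($L_{ij}=0$ for $i\neq j$ non-adjacent). All matrices $\mathbf{L}$ considered have eigenvalues in $[\lambda_{\min},\lambda_{\max}]$ and $\varrho=\max\{|\lambda_{\min}|,|\lambda_{\max}|\}$ bounds their spectral norm. The frequency response $H$ of a recursion is the function such that the steady-state output equals $\sum_n H(\lambda_n)\langle\mathbf{x},\boldsymbol{\phi}_n\rangle\boldsymbol{\phi}_n$. Linear convergence means convergence to the limit exponentially fast in $t$. *)

(* Defs.v *)
From HB Require Import structures.
From mathcomp Require Import all_boot all_order all_algebra.
From mathcomp Require Import complex.
From mathcomp Require Import reals.
Set Implicit Arguments. Unset Strict Implicit. Unset Printing Implicit Defensive.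
Import Order.TTheory GRing.Theory Num.Theory.
Local Open Scope ring_scope.
Local Open Scope complex_scope.

Definition rnorm2 (R : realType) (N : nat) (v : 'cV[R]_N) : R :=
  \sum_(i < N) v i 0 ^+ 2.

Definition spec_norm_le (R : realType) (N : nat) (L : 'M[R]_N) (rho : R) : Prop :=
  0 <= rho /\ forall v : 'cV[R]_N, rnorm2 (L *m v) <= rho ^+ 2 * rnorm2 v.

Definition cmx (R : realType) (m n : nat) (A : 'M[R]_(m, n)) : 'M[R[i]]_(m, n) :=
  map_mx (fun r : R => r%:C) A.

Fixpoint arma1_y (R : realType) (N : nat) (L : 'M[R]_N) (psi phi : R[i])
    (x y0 : 'cV[R[i]]_N) (t : nat) : 'cV[R[i]]_N :=
  match t with
  | 0 => y0
  | t'.+1 => psi *: (cmx L *m arma1_y L psi phi x y0 t') + phi *: x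
  end.

(* output z_t = y_t + c x  (the paper defines z_{t+1} = y_{t+1} + c x; z_0 is irrelevant
   for convergence) *)
Definition arma1_z (R : realType) (N : nat) (L : 'M[R]_N) (psi phi c : R[i])
    (x y0 : 'cV[R[i]]_N) (t : nat) : 'cV[R[i]]_N :=
  arma1_y L psi phi x y0 t + c *: x.

Definition freq_resp (R : realType) (c r p : R[i]) (lam : R) : R[i] :=
  c + r / (lam%:C - p).

(* inner product <x, v> = sum_i x_i conj(v_i), v real *)
Definition cinner (R : realType) (N : nat) (x : 'cV[R[i]]_N) (v : 'cV[R]_N) : R[i] :=
  \sum_(i < N) x i 0 * (v i 0)%:C.

(* linear convergence of a sequence of complex vectors to a limit (entrywise max norm;
   all norms on C^N are equivalent) *)
Definition lin_conv (R : realType) (N : nat) (z : nat -> 'cV[R[i]]_N) (zs : 'cV[R[i]]_N)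
  : Prop :=
  exists (K q : R), 0 <= K /\ 0 <= q /\ q < 1 /\
    forall (t : nat) (i : 'I_N), `|z t i 0 - zs i 0| <= (K * q ^+ t)%:C.

(* Main.v *)
Require Import Defs.
From HB Require Import structures.
From mathcomp Require Import all_boot all_order all_algebra.
From mathcomp Require Import complex.
From mathcomp Require Import reals.
From mathcomp Require Import ring lra.
Import Order.TTheory GRing.Theory Num.Theory.
Local Open Scope ring_scope.
Local Open Scope complex_scope.

Section H.
Context {R : realType}.
Context {N : nat}.

Lemma cmx_mul (m n k : nat) (A : 'M[R]_(m, n)) (B : 'M[R]_(n, k)) :
  cmx (A *m B) = cmx A *m cmx B.
Proof.
apply/matrixP=> i j; rewrite !mxE rmorph_sum; apply: eq_bigr => l _.
by rewrite !mxE rmorphM.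
Qed.

Lemma cmx_scale (m n : nat) (a : R) (A : 'M[R]_(m, n)) :
  cmx (a *: A) = a%:C *: cmx A.
Proof. by apply/matrixP=> i j; rewrite !mxE rmorphM. Qed.

Definition rev (v : 'cV[R[i]]_N) : 'cV[R]_N := \col_i complex.Re (v i 0).
Definition imv (v : 'cV[R[i]]_N) : 'cV[R]_N := \col_i complex.Im (v i 0).
Definition Q (v : 'cV[R[i]]_N) : R := rnorm2 (rev v) + rnorm2 (imv v).

Lemma QE (v : 'cV[R[i]]_N) : Q v = \sum_(i < N) (complex.Re (v i 0) ^+ 2 + complex.Im (v i 0) ^+ 2).
Proof. by rewrite /Q /rnorm2 -big_split /=; apply: eq_bigr => i _; rewrite !mxE. Qed.

Lemma Q_ge0 (v : 'cV[R[i]]_N) : 0 <= Q v.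
Proof. rewrite QE; apply: sumr_ge0 => i _; apply: addr_ge0; apply: sqr_ge0. Qed.

Lemma Q_scale (a : R[i]) (v : 'cV[R[i]]_N) :
  Q (a *: v) = (complex.Re a ^+ 2 + complex.Im a ^+ 2) * Q v.
Proof.
rewrite !QE mulr_sumr; apply: eq_bigr => i _; rewrite !mxE.
case: a => a1 a2; case: (v i 0) => b1 b2 /=. ring.
Qed.

Lemma decomp (v : 'cV[R[i]]_N) : v = cmx (rev v) + 'i%C *: cmx (imv v).
Proof.
apply/matrixP=> i j; rewrite ord1 !mxE.
by case: (v i 0) => a b; simpc.
Qed.

Lemma Q_L (L : 'M[R]_N) rho (v : 'cV[R[i]]_N) : spec_norm_le L rho ->
  Q (cmx L *m v) <= rho ^+ 2 * Q v.
Proof.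
case=> _ H.
have -> : cmx L *m v = cmx (L *m rev v) + 'i%C *: cmx (L *m imv v).
  by rewrite {1}(decomp v) mulmxDr -scalemxAr !cmx_mul.
have -> : Q (cmx (L *m rev v) + 'i%C *: cmx (L *m imv v)) =
   rnorm2 (L *m rev v) + rnorm2 (L *m imv v).
  rewrite QE /rnorm2 -big_split /=; apply: eq_bigr => i _; rewrite !mxE.
  by simpc.
rewrite /Q mulrDr; apply: lerD; exact: H.
Qed.

Lemma entry_le (v : 'cV[R[i]]_N) (i : 'I_N) : `|v i 0| <= (Num.sqrt (Q v))%:C.
Proof.
rewrite normc_def lecR ler_wsqrtr // QE (bigD1 i) //= lerDl.
by apply: sumr_ge0 => j _; apply: addr_ge0; apply: sqr_ge0.
Qed.

Lemma complete (phiv : 'I_N -> 'cV[R]_N) (x : 'cV[R[i]]_N) :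
  (forall n m, (phiv n)^T *m phiv m = ((n == m)%:R)%:M) ->
  x = \sum_(n < N) cinner x (phiv n) *: cmx (phiv n).
Proof.
move=> Hon.
pose P : 'M[R]_N := \matrix_(i, n) phiv n i 0.
have HP : P^T *m P = 1%:M.
  apply/matrixP=> n m; have := congr1 (fun M : 'M[R]_1 => M 0 0) (Hon n m).
  rewrite /= !mxE eqxx mulr1n => <-; apply: eq_bigr => k _; rewrite /P !mxE.
  by [].
have HP2 := mulmx1C HP.
apply/matrixP=> i j; rewrite ord1 summxE.
transitivity (\sum_(k < N) x k 0 * ((k == i)%:R)%:C).
  rewrite (bigD1 i) //= big1 ?addr0; first by rewrite eqxx mulr1.
  by move=> k /negPf ->; rewrite mulr0.
symmetry; under eq_bigr => n _ do rewrite !mxE /cinner mulr_suml.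
rewrite exchange_big /=; apply: eq_bigr => k _.
have := congr1 (fun M : 'M[R]_N => M k i) HP2.
rewrite /P !mxE => <-; rewrite rmorph_sum mulr_sumr; apply: eq_bigr => n _.
by rewrite !mxE rmorphM mulrA.
Qed.

Lemma rnorm2_scale (a : R) (v : 'cV[R]_N) : rnorm2 (a *: v) = a ^+ 2 * rnorm2 v.
Proof. by rewrite /rnorm2 mulr_sumr; apply: eq_bigr => i _; rewrite mxE exprMn. Qed.

Lemma lam_le (L : 'M[R]_N) rho (phiv : 'I_N -> 'cV[R]_N) (lam : 'I_N -> R) n :
  spec_norm_le L rho ->
  (forall n, L *m phiv n = lam n *: phiv n) ->
  (forall n m, (phiv n)^T *m phiv m = ((n == m)%:R)%:M) ->
  `|lam n| <= rho.
Proof.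
move=> [r0 H] He Hon.
have h1 : rnorm2 (phiv n) = 1.
  have := congr1 (fun M : 'M[R]_1 => M 0 0) (Hon n n).
  rewrite /= !mxE eqxx mulr1n /rnorm2 => h; transitivity (true%:R : R); last by []; rewrite -h; apply: eq_bigr => k _.
  by rewrite !mxE expr2.
have := H (phiv n); rewrite He rnorm2_scale h1 !mulr1 => h.
by rewrite -sqrtr_sqr -(ger0_norm r0) -sqrtr_sqr ler_wsqrtr.
Qed.

End H.

Theorem theorem1 (R : realType) (N : nat) (L : 'M[R]_N) (rho : R)
    (phiv : 'I_N -> 'cV[R]_N) (lam : 'I_N -> R)
    (psi phi c : R[i]) (x y0 : 'cV[R[i]]_N) :
  L^T = L ->
  spec_norm_le L rho ->
  (forall n, L *m phiv n = lam n *: phiv n) ->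
  (forall n m, (phiv n)^T *m phiv m = ((n == m)%:R)%:M) ->
  psi != 0 ->
  let r := - phi / psi in
  let p := psi^-1 in
  rho%:C < `|p| ->
  lin_conv (arma1_z L psi phi c x y0)
    (\sum_(n < N) (freq_resp c r p (lam n) * cinner x (phiv n)) *: cmx (phiv n)).
Proof.
move=> HLT Hsp He Hon Hpsi r p Hrho.
have r0 : 0 <= rho by case: Hsp.
have Hcomp := complete phiv x Hon.
pose ys := \sum_(n < N) (r / ((lam n)%:C - p) * cinner x (phiv n)) *: cmx (phiv n).
have Hden n : (lam n)%:C - p != 0.
  rewrite subr_eq0; apply/eqP => E.
  have := lam_le L rho phiv lam n Hsp He Hon.
  move: Hrho; rewrite -E normc_def /= expr0n addr0 sqrtr_sqr ltcR.
  by rewrite ltNge => /negP.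
have Htarget : \sum_(n < N) (freq_resp c r p (lam n) * cinner x (phiv n)) *: cmx (phiv n)
    = ys + c *: x.
  have -> : c *: x = \sum_(n < N) (c * cinner x (phiv n)) *: cmx (phiv n).
    by rewrite {1}Hcomp scaler_sumr; apply: eq_bigr => n _; rewrite scalerA.
  rewrite /ys -big_split /=; apply: eq_bigr => n _.
  by rewrite -scalerDl /freq_resp mulrDl addrC.
have Hfix : psi *: (cmx L *m ys) + phi *: x = ys.
  have -> : phi *: x = \sum_(n < N) (phi * cinner x (phiv n)) *: cmx (phiv n).
    by rewrite {1}Hcomp scaler_sumr; apply: eq_bigr => n _; rewrite scalerA.
  rewrite /ys mulmx_sumr scaler_sumr -big_split /=; apply: eq_bigr => n _.
  rewrite -scalemxAr -cmx_mul He cmx_scale !scalerA -scalerDl; congr (_ *: _).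
  have hd := Hden n.
  move: hd; set d := _ - p => hd.
  have hl : (lam n)%:C = d + p by rewrite /d subrK.
  rewrite hl /r /p.
  field.
  by rewrite hd Hpsi.
pose e t := arma1_y L psi phi x y0 t - ys.
have He1 t : e t.+1 = psi *: (cmx L *m e t).
  rewrite /e /= -{1}Hfix mulmxBr scalerBr opprD addrACA subrr addr0.
  by [].
pose s2 := complex.Re psi ^+ 2 + complex.Im psi ^+ 2.
have s2ge0 : 0 <= s2 by rewrite /s2 addr_ge0 ?sqr_ge0.
have HQ t : Q (e t) <= (s2 * rho ^+ 2) ^+ t * Q (e 0).
  elim: t => [|t IH]; first by rewrite expr0 mul1r.
  rewrite He1 Q_scale -/s2.
  apply: le_trans (ler_wpM2l s2ge0 (Q_L L rho (e t) Hsp)) _.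
  rewrite [(s2 * _) ^+ t.+1]exprS -!mulrA; apply: (ler_wpM2l s2ge0); apply: (ler_wpM2l r0); exact: (ler_wpM2l r0 IH).
pose s := Num.sqrt s2.
have Hns : `|psi| = s%:C by rewrite normc_def.
have s0 : 0 < s.
  have := normr_gt0 psi; rewrite Hpsi Hns ltcE /= => /andP [_ ->] //.
have Hrs : rho < s^-1.
  by move: Hrho; rewrite /p normfV Hns -fmorphV ltcR.
pose q := s * rho.
have q0 : 0 <= q by rewrite mulr_ge0 // ltW.
have q1 : q < 1.
  by rewrite /q -(mulfV (lt0r_neq0 s0)) ltr_pM2l.
pose K := Num.sqrt (Q (e 0)).
exists K, q; split; first exact: sqrtr_ge0.
split; first exact: q0.
split; first exact: q1.
move=> t i.
have Hz : arma1_z L psi phi c x y0 t -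
   \sum_(n < N) (freq_resp c r p (lam n) * cinner x (phiv n)) *: cmx (phiv n) = e t.
  by rewrite Htarget /arma1_z /e opprD addrACA subrr addr0.
have -> : arma1_z L psi phi c x y0 t i 0 -
   (\sum_(n < N) (freq_resp c r p (lam n) * cinner x (phiv n)) *: cmx (phiv n)) i 0
   = e t i 0 by rewrite -Hz !mxE.
apply: le_trans (entry_le _ _) _; rewrite lecR.
have K0 : 0 <= K * q ^+ t by rewrite mulr_ge0 ?sqrtr_ge0 ?exprn_ge0.
rewrite -(ger0_norm K0) -sqrtr_sqr ler_wsqrtr //.
apply: le_trans (HQ t) _.
rewrite [(_ * q ^+ t) ^+ 2]exprMn /K sqr_sqrtr ?Q_ge0 // mulrC; apply: (ler_wpM2l (Q_ge0 _)).
by rewrite -exprM mulnC exprM /q [(_ * rho) ^+ 2]exprMn /s sqr_sqrtr.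
Qed.
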